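(* For $n>2$, the groups $G_{n,\mathcal{D}}^2$ and $G_{n+1}^2/N$ are isomorphic, where $N$ is the normal subgroup of $G_{n+1}^2$ generated by all commutators $a_{i(n+1)}a_{j(n+1)}a_{i(n+1)}^{-1}a_{j(n+1)}^{-1}$, $i,j\in\{1,\dots,n\}$.
   Context: $G_{N}^2$ is the group with generators $a_{ij}=a_{\{i,j\}}$ for $2$-element subsets $\{i,j\}\subset\{1,\dots,N\}$ and relations $a_{ij}^2=1$; $a_{ij}a_{kl}=a_{kl}a_{ij}$ for distinct $i,j,k,l$; $a_{ij}a_{ik}a_{jk}=a_{jk}a_{ik}a_{ij}$ for distinct $i,j,k$. $G_{n,\mathcal{D}}^2$ has generators $a_{ij}$ ($\{i,j\}\subset\{1,\dots,n\}$) and $\tau_i$ ($1\le i\le n$) with relations: $a_{ij}^2=1$; $a_{ij}a_{kl}=a_{kl}a_{ij}$ for distinct $i,j,k,l$; $a_{ij}a_{ik}a_{jk}=a_{jk}a_{ik}a_{ij}$ for distinct $i,j,k$; $\tau_i^2=1$; $\tau_i\tau_j=\tau_j\tau_i$; $\tau_i\tau_ja_{ij}\tau_j\tau_i=a_{ij}$; $a_{ij}\tau_k=\tau_ka_{ij}$ for distinct $i,j,k$. *)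

(* Defs.v *)
From mathcomp Require Import all_boot.
Set Implicit Arguments. Unset Strict Implicit. Unset Printing Implicit Defensive.

(* A letter (x, false) stands for x, (x, true) for x^{-1}. *)
Definition word (X : Type) := seq (X * bool).

Definition inv_letter {X : Type} (l : X * bool) : X * bool := (l.1, ~~ l.2).
Definition inv_word {X : Type} (w : word X) : word X := rev (map inv_letter w).

(* The congruence on words defining the group <X | R>:
   u ~ v iff u and v represent the same element of F(X)/<<R>>. *)
Inductive eqv {X : Type} (R : word X -> Prop) : word X -> word X -> Prop :=
  | eqv_refl  : forall u, eqv R u u
  | eqv_sym   : forall u v, eqv R u v -> eqv R v u
  | eqv_trans : forall u v w, eqv R u v -> eqv R v w -> eqv R u w
  | eqv_cancel : forall u v (l : X * bool),
      eqv R (u ++ l :: inv_letter l :: v) (u ++ v)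
  | eqv_rel : forall u v r, R r -> eqv R (u ++ r ++ v) (u ++ v).

Definition presented_iso {X Y : Type} (R : word X -> Prop) (S : word Y -> Prop) : Prop :=
  exists (phi : word X -> word Y) (psi : word Y -> word X),
    (forall u v, eqv R u v -> eqv S (phi u) (phi v)) /\
    (forall u v, eqv S u v -> eqv R (psi u) (psi v)) /\
    (forall u v, eqv S (phi (u ++ v)) (phi u ++ phi v)) /\
    (forall u v, eqv R (psi (u ++ v)) (psi u ++ psi v)) /\
    (forall u, eqv R (psi (phi u)) u) /\
    (forall v, eqv S (phi (psi v)) v).

Definition gen {X : Type} (x : X) : X * bool := (x, false).
Definition ginv {X : Type} (x : X) : X * bool := (x, true).
Definition commutator {X : Type} (x y : X) : word X :=
  [:: gen x; gen y; ginv x; ginv y].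

(* Generators a_{ij}: 2-element subsets {i,j} of {1..N}, stored as (i,j), i<j. *)
Definition pairs (N : nat) :=
  {p : nat * nat | (1 <= p.1) && (p.1 < p.2) && (p.2 <= N)}.

Definition is_pair {N : nat} (x : pairs N) (i j : nat) : bool :=
  (val x == (i, j)) || (val x == (j, i)).

Definition distinct3 (i j k : nat) : bool := [&& i != j, i != k & j != k].
Definition distinct4 (i j k l : nat) : bool :=
  [&& i != j, i != k, i != l, j != k, j != l & k != l].

Inductive GN_rel (N : nat) : word (pairs N) -> Prop :=
  | GN_sq : forall x : pairs N, GN_rel [:: gen x; gen x]
  | GN_far : forall (i j k l : nat) (x y : pairs N),
      distinct4 i j k l -> is_pair x i j -> is_pair y k l ->
      GN_rel (commutator x y)
  | GN_tetra : forall (i j k : nat) (x y z : pairs N),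
      distinct3 i j k -> is_pair x i j -> is_pair y i k -> is_pair z j k ->
      (* a_ij a_ik a_jk = a_jk a_ik a_ij *)
      GN_rel [:: gen x; gen y; gen z; ginv x; ginv y; ginv z].

Definition idx (n : nat) := {i : nat | (1 <= i) && (i <= n)}.

(* Generators of G_{n,D}^2: a_{ij} (inl) and tau_i (inr). *)
Definition GnD_gen (n : nat) := (pairs n + idx n)%type.

Inductive GnD_rel (n : nat) : word (GnD_gen n) -> Prop :=
  | GnD_a : forall w : word (pairs n), GN_rel w ->
      GnD_rel (map (fun l => (inl l.1, l.2)) w)
  | GnD_tsq : forall t : idx n, GnD_rel [:: gen (inr t); gen (inr t)]
  | GnD_tcomm : forall s t : idx n, GnD_rel (commutator (inr s) (inr t))
  | GnD_tat : forall (s t : idx n) (x : pairs n), is_pair x (val s) (val t) ->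
      GnD_rel [:: gen (inr s); gen (inr t); gen (inl x); gen (inr t); gen (inr s);
                  ginv (inl x)]
  | GnD_atau : forall (i j : nat) (x : pairs n) (t : idx n),
      distinct3 i j (val t) -> is_pair x i j ->
      GnD_rel (commutator (inl x) (inr t)).

(* G_{n+1}^2 / N: add the relators a_{i(n+1)} a_{j(n+1)} a_{i(n+1)}^-1 a_{j(n+1)}^-1,
   1 <= i, j <= n (the normal closure of a set of elements is killed by adding
   them as relators). *)
Inductive GquotN_rel (n : nat) : word (pairs n.+1) -> Prop :=
  | GQ_G : forall w, GN_rel w -> GquotN_rel w
  | GQ_N : forall (x y : pairs n.+1),
      (val x).2 = n.+1 -> (val y).2 = n.+1 -> GquotN_rel (commutator x y).

(* Main.v *)
Require Import Defs.
From mathcomp Require Import all_boot zify.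
Unset Implicit Arguments.

Section Gen.
Variable X : Type.
Variable R : word X -> Prop.
Notation eqv := (eqv R).

Lemma inv_letterK (l : X * bool) : inv_letter (inv_letter l) = l.
Proof. by case: l => x b; rewrite /inv_letter /= negbK. Qed.

Lemma inv_wordK (w : word X) : inv_word (inv_word w) = w.
Proof.
rewrite /inv_word map_rev revK -map_comp.
by rewrite (eq_map (g := id)) ?map_id // => l /=; rewrite inv_letterK.
Qed.

Lemma inv_word_cat (u v : word X) : inv_word (u ++ v) = inv_word v ++ inv_word u.
Proof. by rewrite /inv_word map_cat rev_cat. Qed.

Lemma inv_word_cons l (w : word X) : inv_word (l :: w) = inv_word w ++ [:: inv_letter l].
Proof. by rewrite /inv_word /= rev_cons cats1. Qed.

Lemma eqv_ctx (a b : word X) {u v : word X} : eqv u v -> eqv (a ++ u ++ b) (a ++ v ++ b).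
Proof.
elim=> {u v}.
- move=> u; exact: eqv_refl.
- move=> u v _ H; exact: eqv_sym.
- move=> u v w _ H1 _ H2; exact: eqv_trans H1 H2.
- move=> u v l. have := eqv_cancel R (a ++ u) (v ++ b) l. by rewrite -!catA.
- move=> u v r Hr.
  have := eqv_rel (a ++ u) (v ++ b) Hr. by rewrite -!catA.
Qed.

Lemma eqv_cat {a b c d : word X} : eqv a c -> eqv b d -> eqv (a ++ b) (c ++ d).
Proof.
move=> H1 H2. apply: (eqv_trans (v := c ++ b)).
- have := eqv_ctx [::] b H1. by [].
- have := eqv_ctx c [::] H2. by rewrite !cats0.
Qed.

Lemma rel_nil {r} : R r -> eqv r [::].
Proof. move=> Hr; have := eqv_rel [::] [::] Hr. by rewrite cats0. Qed.

Lemma cancel_inv (w : word X) : eqv (w ++ inv_word w) [::].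
Proof.
elim: w => [|l w IH]; first exact: eqv_refl.
rewrite inv_word_cons /= catA.
apply: (eqv_trans (v := [:: l] ++ [::] ++ [:: inv_letter l])).
- have := eqv_ctx [:: l] [:: inv_letter l] IH. by rewrite /= -catA.
- have := eqv_cancel R [::] [::] l. by [].
Qed.

Lemma cancel_inv' (w : word X) : eqv (inv_word w ++ w) [::].
Proof. have := cancel_inv (inv_word w). by rewrite inv_wordK. Qed.

Lemma rel_inv {r} : R r -> eqv (inv_word r) [::].
Proof.
move=> Hr. apply: eqv_trans (cancel_inv' r).
apply: eqv_sym. have := eqv_rel (inv_word r) [::] Hr. by rewrite !cats0.
Qed.

Lemma eqv_inv {u v : word X} : eqv u v -> eqv (inv_word u) (inv_word v).
Proof.
elim=> {u v}.
- move=> u; exact: eqv_refl.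
- move=> u v _ H; exact: eqv_sym.
- move=> u v w _ H1 _ H2; exact: eqv_trans H1 H2.
- move=> u v l. rewrite !inv_word_cat !inv_word_cons -!catA /= inv_letterK.
  exact: eqv_cancel.
- move=> u v r Hr. rewrite !inv_word_cat -catA.
  have := eqv_ctx (inv_word v) (inv_word u) (rel_inv Hr). by [].
Qed.

Lemma eqv_nil_inv {u : word X} : eqv u [::] -> eqv (inv_word u) [::].
Proof. move=> H; exact: (eqv_inv H). Qed.

Lemma rel_eq {p q : word X} : eqv (p ++ inv_word q) [::] -> eqv p q.
Proof.
move=> H. apply: (eqv_trans (v := p ++ inv_word q ++ q)).
- apply: eqv_sym. have := eqv_ctx p [::] (cancel_inv' q). by rewrite !cats0.
- have := eqv_ctx [::] q H. by rewrite /= catA.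
Qed.

Lemma wrot {p q : word X} : eqv (p ++ q) [::] -> eqv (q ++ p) [::].
Proof.
move=> H. apply: (eqv_trans (v := q ++ (p ++ q) ++ inv_word q)).
- apply: eqv_sym. have := eqv_ctx (q ++ p) [::] (cancel_inv q).
  by rewrite !cats0 -!catA.
- apply: eqv_trans (cancel_inv q). have := eqv_ctx q (inv_word q) H. by [].
Qed.

Lemma wstep (a b : word X) {u v w : word X} : eqv u v -> eqv (a ++ v ++ b) w -> eqv (a ++ u ++ b) w.
Proof. move=> H1 H2. exact: eqv_trans (eqv_ctx a b H1) H2. Qed.

Lemma wcstep (a b : word X) l {w} : eqv (a ++ b) w -> eqv (a ++ l :: inv_letter l :: b) w.
Proof. move=> H. exact: eqv_trans (eqv_cancel R a b l) H. Qed.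

Lemma sq_inv {v : X} : eqv [:: gen v; gen v] [::] -> eqv [:: ginv v] [:: gen v].
Proof.
move=> H. apply: (eqv_trans (v := [:: ginv v] ++ [:: gen v; gen v] ++ [::])).
- apply: eqv_sym. have := eqv_ctx [:: ginv v] [::] H. by [].
- exact: (eqv_cancel R [::] [:: gen v] (ginv v)).
Qed.

Lemma wswap {v w : X} : eqv (commutator v w) [::] -> eqv [:: gen v; gen w] [:: gen w; gen v].
Proof.
move=> H. apply: (eqv_trans (v := commutator v w ++ [:: gen w; gen v])).
- apply: eqv_sym. rewrite /commutator /=.
  have := wcstep [:: gen v; gen w] [::] (ginv v) (eqv_refl R _).
  move/(wcstep [:: gen v; gen w; ginv v] [:: gen v] (ginv w)).
  by [].
- have := eqv_ctx [::] [:: gen w; gen v] H. by [].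
Qed.


End Gen.
Arguments inv_letterK {X}. Arguments inv_wordK {X}. Arguments inv_word_cat {X}.
Arguments inv_word_cons {X}. Arguments eqv_ctx {X R} a b {u v}. Arguments eqv_cat {X R a b c d}.
Arguments rel_nil {X R r}. Arguments cancel_inv {X} R. Arguments cancel_inv' {X} R.
Arguments rel_inv {X R r}. Arguments eqv_inv {X R u v}. Arguments eqv_nil_inv {X R u}.
Arguments rel_eq {X R p q}. Arguments wrot {X R p q}. Arguments wstep {X R} a b {u v w}.
Arguments wcstep {X R} a b l {w}. Arguments sq_inv {X R v}. Arguments wswap {X R v w}.

Section Hom.
Context {X Y : Type}.
Definition ext (f : X -> word Y) (w : word X) : word Y :=
  flatten (map (fun l => if l.2 then inv_word (f l.1) else f l.1) w).

Lemma ext_cat (f : X -> word Y) u v : ext f (u ++ v) = ext f u ++ ext f v.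
Proof. by rewrite /ext map_cat flatten_cat. Qed.

Lemma ext_cons (f : X -> word Y) l w : ext f (l :: w) = (if l.2 then inv_word (f l.1) else f l.1) ++ ext f w.
Proof. by []. Qed.

Lemma ext_letter_inv (f : X -> word Y) (l : X * bool) :
  (if (inv_letter l).2 then inv_word (f (inv_letter l).1) else f (inv_letter l).1)
  = inv_word (if l.2 then inv_word (f l.1) else f l.1).
Proof. case: l => x [] //=; by rewrite inv_wordK. Qed.

Lemma ext_inv (f : X -> word Y) w : ext f (inv_word w) = inv_word (ext f w).
Proof.
elim: w => [|l w IH]; first by [].
by rewrite inv_word_cons ext_cat IH ext_cons inv_word_cat /ext /= cats0 ext_letter_inv.
Qed.

Lemma ext_eqv (R : word X -> Prop) (S : word Y -> Prop) (f : X -> word Y) :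
  (forall r, R r -> eqv S (ext f r) [::]) ->
  forall u v, eqv R u v -> eqv S (ext f u) (ext f v).
Proof.
move=> Hf u v; elim=> {u v}.
- move=> u; exact: eqv_refl.
- move=> u v _ H; exact: eqv_sym.
- move=> u v w _ H1 _ H2; exact: eqv_trans H1 H2.
- move=> u v l. rewrite !ext_cat !ext_cons ext_letter_inv !catA -(catA (ext f u)).
  rewrite -(catA _ _ (ext f v)).
  have := eqv_ctx (R:=S) (ext f u) (ext f v) (cancel_inv S (if l.2 then inv_word (f l.1) else f l.1)).
  by [].
- move=> u v r Hr. rewrite !ext_cat. exact: eqv_ctx (Hf r Hr).
Qed.
End Hom.

Lemma iso_of (X Y : Type) (R : word X -> Prop) (S : word Y -> Prop)
  (f : X -> word Y) (g : Y -> word X) :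
  (forall r, R r -> eqv S (ext f r) [::]) ->
  (forall r, S r -> eqv R (ext g r) [::]) ->
  (forall x, eqv R (ext g (f x)) [:: gen x]) ->
  (forall y, eqv S (ext f (g y)) [:: gen y]) ->
  presented_iso R S.
Proof.
move=> H1 H2 H3 H4.
have K: forall (X Y : Type) (R : word X -> Prop) (f : X -> word Y) g,
    (forall x, eqv R (ext g (f x)) [:: gen x]) -> forall u, eqv R (ext g (ext f u)) u.
  move=> X' Y' R' f' g' H u; elim: u => [|l u IH]; first exact: eqv_refl.
  rewrite ext_cons ext_cat. have ->: l :: u = [:: l] ++ u by [].
  apply: eqv_cat IH. case: l => x [] /=.
  + rewrite ext_inv. have := eqv_inv (H x). by [].
  + exact: H.
exists (ext f), (ext g); split; [|split; [|split; [|split; [|split]]]].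
- exact: ext_eqv.
- exact: ext_eqv.
- move=> u v; rewrite ext_cat; exact: eqv_refl.
- move=> u v; rewrite ext_cat; exact: eqv_refl.
- exact: K.
- exact: K.
Qed.
Unset Implicit Arguments.

Section Conc.
Variable n : nat.

Lemma liftp_proof (p : pairs n) :
  (1 <= (val p).1) && ((val p).1 < (val p).2) && ((val p).2 <= n.+1).
Proof. have := valP p. lia. Qed.
Definition liftp (p : pairs n) : pairs n.+1 := exist _ (val p) (liftp_proof p).

Lemma idx_bound (t : idx n) : (1 <= val t) && (val t <= n).
Proof. exact: valP t. Qed.

Lemma tp_proof (t : idx n) :
  (1 <= (val t, n.+1).1) && ((val t, n.+1).1 < (val t, n.+1).2) && ((val t, n.+1).2 <= n.+1).
Proof. have := idx_bound t. simpl. lia. Qed.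
Definition tp (t : idx n) : pairs n.+1 := exist _ (val t, n.+1) (tp_proof t).

Definition hf (x : GnD_gen n) : pairs n.+1 :=
  match x with inl p => liftp p | inr t => tp t end.
Definition f (x : GnD_gen n) : word (pairs n.+1) := [:: gen (hf x)].

Definition g (p : pairs n.+1) : word (GnD_gen n) :=
  match (insub (val p) : option (pairs n)) with
  | Some q => [:: gen (inl q)]
  | None => match (insub (val p).1 : option (idx n)) with
            | Some t => [:: gen (inr t)]
            | None => [::] end end.
Arguments g : simpl never.

Lemma g_lift q : g (liftp q) = [:: gen (inl q)].
Proof. by rewrite /g /= valK. Qed.

Lemma g_tp t : g (tp t) = [:: gen (inr t)].
Proof.
rewrite /g /= insubF; first by rewrite valK.
apply/negP. rewrite /=. lia.
Qed.

Lemma pair_cases (p : pairs n.+1) : (exists q, p = liftp q) \/ (exists t, p = tp t).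
Proof.
case: p => [[a b] H].
case: (leqP b n) => Hb.
- left. have H' : (1 <= (a, b).1) && ((a, b).1 < (a, b).2) && ((a, b).2 <= n).
    move: H Hb => /=. lia.
  exists (exist _ (a, b) H'). exact: val_inj.
- right. have H' : (1 <= a) && (a <= n). move: H Hb => /=. lia.
  exists (exist _ a H'). apply: val_inj => /=.
  have -> : b = n.+1 by move: H Hb => /=; lia. by [].
Qed.

Lemma ip_q (q : pairs n) i j : is_pair q i j ->
  (1 <= i) && (i <= n) && (1 <= j) && (j <= n) && (i != j).
Proof.
case: q => [[a b] H]. rewrite /is_pair /= => /orP [] /eqP [] <- <-; move: H => /=; lia.
Qed.

Lemma ip_tp (t : idx n) i j : is_pair (tp t) i j ->
  ((i == val t) && (j == n.+1)) || ((i == n.+1) && (j == val t)).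
Proof.
rewrite /is_pair /= => /orP [] /eqP [] <- <-; rewrite !eqxx //= orbT //.
Qed.

Lemma ext_f w : ext f w = map (fun l => (hf l.1, l.2)) w.
Proof. elim: w => [|[x []] w IH] //; by rewrite ext_cons IH. Qed.

Lemma inv_word1 (Z : Type) (a : Z) b : inv_word [:: (a, b)] = [:: (a, ~~ b)].
Proof. by []. Qed.

Lemma lift_rel w : @GN_rel n w -> @GN_rel n.+1 (map (fun l => (liftp l.1, l.2)) w).
Proof.
case=> [x|i j k l x y H1 H2 H3|i j k x y z H1 H2 H3 H4].
- exact: (GN_sq (liftp x)).
- exact: (GN_far (x:=liftp x) (y:=liftp y) H1 H2 H3).
- exact: (GN_tetra (x:=liftp x) (y:=liftp y) (z:=liftp z) H1 H2 H3 H4).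
Qed.


Lemma H1 r : @GnD_rel n r -> eqv (@GquotN_rel n) (ext f r) [::].
Proof.
move=> Hr; rewrite ext_f; case: Hr.
- move=> w Hw. rewrite -map_comp. apply: rel_nil. apply: GQ_G. exact: (lift_rel w Hw).
- move=> t. apply: rel_nil. apply: GQ_G. exact: (GN_sq (tp t)).
- move=> s t. apply: rel_nil. by apply: GQ_N.
- move=> s t x Hx /=.
  set y := tp s; set z := tp t; set X := liftp x.
  have Hq := ip_q x _ _ Hx. have Hs := idx_bound s. have Ht := idx_bound t.
  have Hd : distinct3 (val s) (val t) n.+1 by rewrite /distinct3; lia.
  have Hy : is_pair y (val s) n.+1 by rewrite /is_pair eqxx.
  have Hz : is_pair z (val t) n.+1 by rewrite /is_pair eqxx.
  have T : eqv (@GquotN_rel n) [:: gen X; gen y; gen z; ginv X; ginv y; ginv z] [::].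
    exact: (rel_nil (GQ_G (GN_tetra (x:=X) (y:=y) (z:=z) Hd Hx Hy Hz))).
  have C : eqv (@GquotN_rel n) (commutator z y) [::] by apply: rel_nil; apply: GQ_N.
  have Sy : eqv (@GquotN_rel n) [:: gen y; gen y] [::] by apply: rel_nil; apply: GQ_G; apply: GN_sq.
  have Sz : eqv (@GquotN_rel n) [:: gen z; gen z] [::] by apply: rel_nil; apply: GQ_G; apply: GN_sq.
  apply: (wstep [:: gen y; gen z; gen X] [:: ginv X] (wswap C)).
  apply: (wstep [:: gen y; gen z] [:: ginv X] (rel_eq (p:=[:: gen X; gen y; gen z]) (q:=[:: gen z; gen y; gen X]) T)).
  apply: (wcstep [:: gen y; gen z; gen z; gen y] [::] (gen X)).
  apply: (wstep [:: gen y] [:: gen y] Sz).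
  apply: (wstep [::] [::] Sy). exact: eqv_refl.
- move=> i j x t Hd Hx. apply: rel_nil; apply: GQ_G.
  have Hq := ip_q x i j Hx; have Ht := idx_bound t.
  apply: (GN_far (i:=i) (j:=j) (k:=val t) (l:=n.+1) (x:=liftp x) (y:=tp t)) => //.
  + move: Hd; rewrite /distinct4 /distinct3; lia.
  + by rewrite /is_pair eqxx.
Qed.


Lemma H3 x : eqv (@GnD_rel n) (ext g (f x)) [:: gen x].
Proof.
case: x => [p|t]; rewrite /f ext_cons /= ?g_lift ?g_tp; exact: eqv_refl.
Qed.

Lemma H4 y : eqv (@GquotN_rel n) (ext f (g y)) [:: gen y].
Proof.
case: (pair_cases y) => [[q ->]|[t ->]]; rewrite ?g_lift ?g_tp ext_f /=; exact: eqv_refl.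
Qed.

Notation RR := (@GnD_rel n).

Lemma sqA (q : pairs n) : eqv RR [:: gen (inl q); gen (inl q)] [::].
Proof. exact: (rel_nil (GnD_a (GN_sq q))). Qed.
Lemma sqT (t : idx n) : eqv RR [:: gen (inr t); gen (inr t)] [::].
Proof. exact: (rel_nil (GnD_tsq t)). Qed.
Lemma commT (s t : idx n) : eqv RR (commutator (inr s) (inr t)) [::].
Proof. exact: (rel_nil (GnD_tcomm s t)). Qed.

Ltac extg := rewrite /ext /commutator /= ?g_lift ?g_tp ?inv_word1 /=.

Lemma H2 r : @GquotN_rel n r -> eqv RR (ext g r) [::].
Proof.
case.
- move=> w; case.
  + move=> x; case: (pair_cases x) => [[q ->]|[t ->]]; extg; [exact: sqA | exact: sqT].
  + move=> i j k l x y Hd.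
    case: (pair_cases x) => [[q1 ->]|[t1 ->]]; case: (pair_cases y) => [[q2 ->]|[t2 ->]] => Hx Hy; extg.
    * have Hx1 : is_pair q1 i j := Hx. have Hy1 : is_pair q2 k l := Hy. have HH := rel_nil (GnD_a (GN_far Hd Hx1 Hy1)). exact: HH.
    * have Hq := ip_q q1 i j Hx; have Ht := ip_tp t2 k l Hy; have Hb := idx_bound t2.
      apply: rel_nil. apply: (GnD_atau (i:=i) (j:=j)) => //.
      move: Hd; rewrite /distinct4 /distinct3; lia.
    * have Hq := ip_q q2 k l Hy; have Ht := ip_tp t1 i j Hx; have Hb := idx_bound t1.
      have Hd' : distinct3 k l (val t1) by move: Hd; rewrite /distinct4 /distinct3; lia.
      exact: (eqv_nil_inv (rel_nil (GnD_atau (x:=q2) (t:=t1) Hd' Hy))).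
    * exact: commT.
  + move=> i j k x y z Hd.
    case: (pair_cases x) => [[q1 ->]|[t1 ->]]; case: (pair_cases y) => [[q2 ->]|[t2 ->]];
      case: (pair_cases z) => [[q3 ->]|[t3 ->]] => Hx Hy Hz; extg.
    * exact: (rel_nil (GnD_a (GN_tetra (x:=q1) (y:=q2) (z:=q3) Hd Hx Hy Hz))).
    * exfalso. have := ip_q q1 i j Hx; have := ip_q q2 i k Hy; have := ip_tp t3 j k Hz.
      have := idx_bound t3. move: Hd; rewrite /distinct3; lia.
    * exfalso. have := ip_q q1 i j Hx; have := ip_tp t2 i k Hy; have := ip_q q3 j k Hz.
      have := idx_bound t2. move: Hd; rewrite /distinct3; lia.
    *
      have := ip_q q1 i j Hx; have := ip_tp t2 i k Hy; have := ip_tp t3 j k Hz.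
      have := idx_bound t2; have := idx_bound t3. move=> B3 B2 H3' H2' H1'.
      have e2 : val t2 = i by lia. have e3 : val t3 = j by lia.
      apply: (wstep [:: gen (inl q1); gen (inr t2); gen (inr t3)] [:: ginv (inr t2); ginv (inr t3)] (sq_inv (sqA q1))).
      apply: (wstep [:: gen (inl q1); gen (inr t2); gen (inr t3); gen (inl q1)] [:: ginv (inr t3)] (sq_inv (sqT t2))).
      apply: (wstep [:: gen (inl q1); gen (inr t2); gen (inr t3); gen (inl q1); gen (inr t2)] [::] (sq_inv (sqT t3))).
      apply: (wstep [:: gen (inl q1); gen (inr t2); gen (inr t3); gen (inl q1)] [::] (wswap (commT t2 t3))).
      apply: (wrot (p:=[:: gen (inr t2); gen (inr t3); gen (inl q1); gen (inr t3); gen (inr t2)]) (q:=[:: gen (inl q1)])).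
      apply: (wstep [:: gen (inr t2); gen (inr t3); gen (inl q1); gen (inr t3); gen (inr t2)] [::] (eqv_sym (sq_inv (sqA q1)))).
      apply: rel_nil. apply: GnD_tat. by rewrite e2 e3.
    * exfalso. have := ip_tp t1 i j Hx; have := ip_q q2 i k Hy; have := ip_q q3 j k Hz.
      have := idx_bound t1. move: Hd; rewrite /distinct3; lia.
    *
      have := ip_tp t1 i j Hx; have := ip_q q2 i k Hy; have := ip_tp t3 j k Hz.
      have := idx_bound t1; have := idx_bound t3. move=> B3 B1 H3' H2' H1'.
      have e1 : val t1 = i by lia. have e3 : val t3 = k by lia.
      apply: (wstep [:: gen (inr t1); gen (inl q2); gen (inr t3)] [:: ginv (inl q2); ginv (inr t3)] (sq_inv (sqT t1))).
      apply: (wstep [:: gen (inr t1); gen (inl q2); gen (inr t3); gen (inr t1)] [:: ginv (inr t3)] (sq_inv (sqA q2))).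
      apply: (wstep [:: gen (inr t1); gen (inl q2); gen (inr t3); gen (inr t1); gen (inl q2)] [::] (sq_inv (sqT t3))).
      apply: (wrot (p:=[:: gen (inr t3)]) (q:=[:: gen (inr t1); gen (inl q2); gen (inr t3); gen (inr t1); gen (inl q2)])).
      apply: (wstep [::] [:: gen (inl q2); gen (inr t3); gen (inr t1); gen (inl q2)] (wswap (commT t3 t1))).
      apply: (wstep [:: gen (inr t1); gen (inr t3); gen (inl q2); gen (inr t3); gen (inr t1)] [::] (eqv_sym (sq_inv (sqA q2)))).
      apply: rel_nil. apply: GnD_tat. by rewrite e1 e3.
    *
      have := ip_tp t1 i j Hx; have := ip_tp t2 i k Hy; have := ip_q q3 j k Hz.
      have := idx_bound t1; have := idx_bound t2. move=> B2 B1 H3' H2' H1'.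
      have e1 : val t1 = j by lia. have e2 : val t2 = k by lia.
      apply: (wstep [:: gen (inr t1); gen (inr t2); gen (inl q3)] [:: ginv (inr t2); ginv (inl q3)] (sq_inv (sqT t1))).
      apply: (wstep [:: gen (inr t1); gen (inr t2); gen (inl q3); gen (inr t1)] [:: ginv (inl q3)] (sq_inv (sqT t2))).
      apply: (wstep [:: gen (inr t1); gen (inr t2); gen (inl q3)] [:: ginv (inl q3)] (wswap (commT t1 t2))).
      apply: rel_nil. apply: GnD_tat. by rewrite e1 e2.
    * exfalso. have := ip_tp t1 i j Hx; have := ip_tp t2 i k Hy; have := ip_tp t3 j k Hz.
      move: Hd; rewrite /distinct3; lia.
- move=> x y.
  case: (pair_cases x) => [[q ->]|[s ->]]; first by have := valP q => /= ? Ex; lia.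
  case: (pair_cases y) => [[q ->]|[t ->]]; first by have := valP q => /= ? _ Ey; lia.
  move=> _ _.
  extg. exact: commT.
Qed.

End Conc.

Theorem mainTheorem8 (n : nat) : 2 < n ->
  presented_iso (@GnD_rel n) (@GquotN_rel n).
Proof.
move=> _. exact: (iso_of _ _ _ _ (f n) (g n) (H1 n) (H2 n) (H3 n) (H4 n)).
Qed.
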